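(* Let $m\in\mathbb{N}$, let $f_0,\dots,f_m\in\mathbb{C}[[z]]$ be in general position, let $n\ge m-1$, and write $n=m-1+(m+1)k+\ell$ with $\ell\in\{0,\dots,m\}$, $k\in\{0,1,2,\dots\}$. Put $Q_{\mathbf{k}^{[n]},j}:=A_{m+1,m+1-j}^{[n]}$, $j=0,\dots,m$. 1) If $\ell=0$, then $\deg A_{m+1,s}^{[n]}=k$ for all $s=1,\dots,m+1$, and $(Q_{\mathbf{k}^{[n]},0},\dots,Q_{\mathbf{k}^{[n]},m})$ is a tuple of Hermite–Padé polynomials of type I for $[f_0,\dots,f_m]$ and the multiindex $\mathbf{k}^{[n]}=(k,\dots,k)$, with order of tangency $(m+1)k+m=n+1$, i.e. $\sum_{j=0}^mQ_{\mathbf{k}^{[n]},j}f_j=O(z^{n+1})$. 2) If $\ell\in\{1,\dots,m\}$, then $\deg A_{m+1,m+1-s}^{[n]}=k+1$ for $s=0,\dots,\ell-1$ and $\deg A_{m+1,m+1-s}^{[n]}=k$ for $s=\ell,\dots,m$, and $(Q_{\mathbf{k}^{[n]},0},\dots,Q_{\mathbf{k}^{[n]},m})$ is a tuple of Hermite–Padé polynomials of type I for $[f_0,\dots,f_m]$ and the multiindex $\mathbf{k}^{[n]}=(\underbrace{k+1,\dots,k+1}_{\ell},\underbrace{k,\dots,k}_{m+1-\ell})$, with order of tangency $|\mathbf{k}^{[n]}|+m=(m+1)k+m+\ell=n+1$, i.e. $\sum_{j=0}^mQ_{\mathbf{k}^{[n]},j}f_j=O(z^{n+1})$. In both cases $\mathbf{k}^{[n]}=(k_0,\dots,k_m)$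 with $k_j=\deg A_{m+1,m+1-j}^{[n]}$ and $|\mathbf{k}^{[n]}|+m=n+1$.
   Context: For $g\in\mathbb{C}[[z]]$, $g=O(z^N)$ means the coefficients of $z^0,\dots,z^{N-1}$ vanish. For $\mathbf{k}=(k_0,\dots,k_m)\in\mathbb{Z}_+^{m+1}$, $|\mathbf{k}|=\sum k_j$, a tuple of polynomials $(Q_0,\dots,Q_m)$, not all zero, with $\deg Q_j\le k_j$ and $\sum_jQ_jf_j=O(z^{|\mathbf{k}|+m})$ is a tuple of Hermite–Padé polynomials of type I for $[f_0,\dots,f_m]$ and $\mathbf{k}$ ($|\mathbf{k}|+m$ is the order of tangency). Construction: put $f_j^{[0]}:=f_j$, $j=0,\dots,m$. Recursively for $n\ge0$: let $c_j^{[n]}$ be the constant term of $f_j^{[n]}$; $a_j^{[n]}:=-c_j^{[n]}/c_{j-1}^{[n]}$ ($j=1,\dots,m$); $f_m^{[n+1]}:=f_0^{[n]}$, $f_j^{[n+1]}:=z^{-1}(f_{j+1}^{[n]}+a_{j+1}^{[n]}f_j^{[n]})$ ($j=0,\dots,m-1$). $M^{[n]}$ is the $(m+1)\times(m+1)$ polynomial matrix whose first row is $(0,\dots,0,z)$ and whose $i$-th row, $i=2,\dots,m+1$, has $1$ in column $i-1$, $a_{m+2-i}^{[n]}$ in column $i$, zeros elsewhere; $A^{[n]}:=M^{[n]}\cdots M^{[0]}$ with entries $A_{i,s}^{[n]}\in\mathbb{C}[z]$. General position: all $c_j^{[n]}\neq0$, and for every $n\ge0$ and every entry of $A^{[n+1]}=M^{[n+1]}A^{[n]}$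 (a sum of at most two products of an entry of $M^{[n+1]}$ and an entry of $A^{[n]}$), the degree of the entry equals the maximum of the degrees of these products (zero polynomial has degree $-\infty$). *)

(* Defs.v *)
(* Complex numbers are modelled as R[i] = complex R for
   R : realType (a complete archimedean ordered field, i.e. the reals). *)
From HB Require Import structures.
From mathcomp Require Import all_boot all_order all_algebra.
From mathcomp Require Import complex.
From mathcomp Require Import reals.
Set Implicit Arguments. Unset Strict Implicit. Unset Printing Implicit Defensive.
Import Order.TTheory GRing.Theory Num.Theory.
Local Open Scope ring_scope.

Section HP.
Variable C : fieldType.

(* A formal power series in C[[z]] is its coefficient sequence nat -> C.
   A family f_0,...,f_m is given as f : nat -> (nat -> C); only j <= m matters. *)

Definition bigOz (g : nat -> C) (N : nat) : Prop := forall i, (i < N)%N -> g i = 0.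

Definition pmulS (p : {poly C}) (g : nat -> C) : nat -> C :=
  fun i => \sum_(t < i.+1) p`_t * g (i - t)%N.

Definition acoef (g : nat -> nat -> C) (j : nat) : C := - (g j 0%N) / (g j.-1 0%N).

Fixpoint fs (m : nat) (f : nat -> nat -> C) (n : nat) : nat -> nat -> C :=
  match n with
  | 0%N => f
  | n'.+1 => let g := fs m f n' in
      fun j i => if j == m then g 0%N i
                 else if (j < m)%N then g j.+1 i.+1 + acoef g j.+1 * g j i.+1
                 else 0
  end.

Definition an (m : nat) (f : nat -> nat -> C) (n j : nat) : C := acoef (fs m f n) j.

(* M^{[n]} (0-based indices): row 0 = (0,...,0,z); row i>=1 has 1 in column
   i-1 and a_{m+1-i}^{[n]} in column i. *)
Definition Mmat (m : nat) (f : nat -> nat -> C) (n : nat) : 'M[{poly C}]_m.+1 :=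
  \matrix_(i, j) if i == 0 :> nat then (if j == m :> nat then 'X else 0)
                 else if j == i.-1 :> nat then 1
                 else if j == i :> nat then (an m f n (m.+1 - i))%:P
                 else 0.

Fixpoint Amat (m : nat) (f : nat -> nat -> C) (n : nat) : 'M[{poly C}]_m.+1 :=
  match n with
  | 0%N => Mmat m f 0
  | n'.+1 => Mmat m f n *m Amat m f n'
  end.

(* Degrees are expressed through size (= deg + 1,
   size 0 = 0, corresponding to deg 0 = -oo), which is monotone, so
   "deg of entry = max of degs of the products" becomes the statement below;
   products with a zero entry of M^{[n+1]} have size 0 and do not affect the max. *)
Definition general_position (m : nat) (f : nat -> nat -> C) : Prop :=
  (forall n j, (j <= m)%N -> fs m f n j 0%N != 0) /\
  (forall n (i s : 'I_m.+1),
     size (Amat m f n.+1 i s) =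
     (\max_(t < m.+1) size (Mmat m f n.+1 i t * Amat m f n t s)%R)%N).

Definition HP_typeI (m : nat) (f : nat -> nat -> C) (kv : 'I_m.+1 -> nat)
    (Q : 'I_m.+1 -> {poly C}) : Prop :=
  [/\ exists j, Q j != 0,
      forall j, (size (Q j) <= (kv j).+1)%N
    & bigOz (fun i => \sum_(j < m.+1) pmulS (Q j) (f j) i)
            ((\sum_(j < m.+1) kv j) + m)%N].

End HP.

(* Main.v *)
Require Import Defs.
From HB Require Import structures.
From mathcomp Require Import all_boot all_order all_algebra.
From mathcomp Require Import complex reals.
From mathcomp Require Import zify.
Import Order.TTheory GRing.Theory Num.Theory.
Definition dsz (m t i s : nat) : nat :=
  if (0 < i) && (s <= i) then (if i <= t + s then (t + s - i) %/ m.+1 + 1 else 0)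
  else (if i + m.+1 <= t + s then (t + s - i) %/ m.+1 + 1 else 0).

Lemma addd_div x d : 0 < d -> (x + d) %/ d = x %/ d + 1.
Proof. move=> d0; by rewrite divnDr ?dvdnn // divnn d0. Qed.

Lemma dsz_row0 m t s : 0 < t -> s <= m ->
  (if dsz m t m s == 0 then 0 else (dsz m t m s).+1) = dsz m t.+1 0 s.
Proof.
move=> t0 sm; rewrite /dsz /=.
case: m sm => [|m] sm.
  have -> : s = 0 by lia.
  rewrite !divn1 /=.
  have -> : (0 + 1 <= t + 0) = true by lia.
  rewrite addn1 /=; lia.
have -> : (0 < m.+1) && (s <= m.+1) = true by rewrite sm.
case: (ltnP m (t + s)) => h; last first.
  have -> : (0 + m.+2 <= t.+1 + s) = false by lia.
  by [].
rewrite addn1 /=.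
have -> : (0 + m.+2 <= t.+1 + s) = true by lia.
have -> : t.+1 + s - 0 = (t + s - m.+1) + m.+2 by lia.
rewrite addd_div //; lia.
Qed.

Lemma dsz_rowS m t i s : 0 < t -> 0 < i -> i <= m -> s <= m ->
  maxn (dsz m t i.-1 s) (dsz m t i s) = dsz m t.+1 i s.
Proof.
move=> t0 i0 im sm; rewrite /dsz i0 /=.
have mono : forall x y, x <= y -> x %/ m.+1 + 1 <= y %/ m.+1 + 1.
  by move=> x y xy; rewrite leq_add2r leq_div2r.
case: (ltngtP s i) => si.
-
  case: (ltnP 1 i) => i1.
    have -> : (0 < i.-1) && (s <= i.-1) = true by lia.
    have -> : t + s - i.-1 = t.+1 + s - i by lia.
    have -> : (i.-1 <= t + s) = (i <= t.+1 + s) by lia.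
    repeat (case: ifP => ?); rewrite ?maxn0 ?max0n //;
      try (apply/maxn_idPl; apply: mono; lia); lia.
  have -> : i = 1 by lia.
  have -> : s = 0 by lia.
  rewrite /= !addn0.
  have -> : (1 <= t) = true by lia.
  rewrite subn0 subSS subn0.
  case: ifP => h1.
    apply/maxn_idPl; apply: mono; lia.
  rewrite max0n !divn_small; lia.
-
  have -> : (0 < i.-1) && (s <= i.-1) = false by lia.
  have -> : t + s - i.-1 = t.+1 + s - i by lia.
  have -> : (i.-1 + m.+1 <= t + s) = (i + m.+1 <= t.+1 + s) by lia.
  repeat (case: ifP => ?); rewrite ?maxn0 ?max0n //;
      try (apply/maxn_idPl; apply: mono; lia); lia.
-
  subst s.
  have -> : (0 < i.-1) && (i <= i.-1) = false by lia.
  have -> : (i.-1 + m.+1 <= t + i) = (m.+1 <= t.+1) by lia.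
  have -> : t + i - i.-1 = t.+1 by lia.
  have -> : (i <= t + i) = true by lia.
  have -> : (i <= t.+1 + i) = true by lia.
  have -> : t + i - i = t by lia.
  have -> : t.+1 + i - i = t.+1 by lia.
  case: ifP => h1.
    apply/maxn_idPl; apply: mono; lia.
  rewrite !divn_small; lia.
Qed.

Lemma dsz_last m k l s : l <= m -> s <= m -> 0 < m + m.+1 * k + l ->
  dsz m (m + m.+1 * k + l) m s = k + (l + s >= m.+1) + 1.
Proof.
move=> lm sm tp; rewrite /dsz.
have E : m + m.+1 * k + l + s - m = k * m.+1 + (l + s) by lia.
case: m lm sm E tp => [|m] lm sm E tp.
  have -> : l = 0 by lia. have -> : s = 0 by lia.
  rewrite /= !divn1; case: ifP; lia.
rewrite /= sm.
have -> : m.+1 <= m.+1 + m.+2 * k + l + s = true by lia.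
rewrite E divnMDl //.
case: (ltnP (l + s) m.+2) => h.
  rewrite divn_small //; lia.
have -> : l + s = (l + s - m.+2) + m.+2 by lia.
rewrite addd_div // divn_small; lia.
Qed.
Local Open Scope ring_scope.
Lemma big_one (R : Type) (idx : R) (op : Monoid.com_law idx) n (F : 'I_n -> R) a :
  (forall t, t != a -> F t = idx) -> \big[op/idx]_t F t = F a.
Proof.
move=> H; rewrite (bigD1 a) //= big1 ?Monoid.mulm1 //; by move=> t /andP[_ ?]; apply: H.
Qed.

Lemma big_two (R : Type) (idx : R) (op : Monoid.com_law idx) n (F : 'I_n -> R) a b :
  a != b -> (forall t, t != a -> t != b -> F t = idx) ->
  \big[op/idx]_t F t = op (F a) (F b).
Proof.
move=> ab H; rewrite (bigD1 a) //= (bigD1 b) 1?eq_sym //= big1 ?Monoid.mulm1 //; by move=> t; rewrite ?andTb => /andP[? ?]; apply: H.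
Qed.

Section Main.
Variable C : fieldType.
Variable m : nat.
Variable f : nat -> nat -> C.

Lemma Mmat_E n (i t : 'I_m.+1) : Mmat m f n i t =
  if i == 0 :> nat then (if t == m :> nat then 'X else 0)
  else if t == i.-1 :> nat then 1
  else if t == i :> nat then (an m f n (m.+1 - i))%:P else 0.
Proof. by rewrite mxE. Qed.

Definition pi (i : 'I_m.+1) : 'I_m.+1 := inord i.-1.

Lemma pi_val (i : 'I_m.+1) : (pi i : nat) = i.-1.
Proof. rewrite /pi inordK //; case: i => [[|i]] h /=; lia. Qed.

Lemma mulM0 n (P : 'M[{poly C}]_m.+1) (i s : 'I_m.+1) : (i : nat) = 0%N ->
  (Mmat m f n *m P) i s = 'X * P ord_max s.
Proof.
move=> i0; rewrite mxE (big_one _ _ _ _ _ ord_max) ?Mmat_E ?i0 //= ?eqxx //.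
move=> t tm; rewrite Mmat_E i0 /=.
have -> : (t == m :> nat) = false by apply/negbTE; move: tm; apply: contra => /eqP e; apply/eqP/val_inj.
by rewrite mul0r.
Qed.

Lemma mulMS n (P : 'M[{poly C}]_m.+1) (i s : 'I_m.+1) : (0 < i)%N ->
  (Mmat m f n *m P) i s = P (pi i) s + (an m f n (m.+1 - i))%:P * P i s.
Proof.
move=> i0; have ne0 : (i == 0 :> nat) = false by case: (i : nat) i0.
rewrite mxE (big_two _ _ _ _ _ (pi i) i).
- rewrite !Mmat_E ne0 pi_val eqxx mul1r; congr (_ + _).
  rewrite (_ : (nat_of_ord i == i.-1) = false) ?eqxx //; lia.
- apply/negP => /eqP/(f_equal val) /=; rewrite pi_val; lia.
move=> t t1 t2; rewrite Mmat_E ne0.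
have -> : (t == i.-1 :> nat) = false.
  by apply/negbTE; move: t1; apply: contra => /eqP e; apply/eqP/val_inj => /=; rewrite pi_val.
have -> : (t == i :> nat) = false by apply/negbTE; move: t2; apply: contra => /eqP e; apply/eqP/val_inj.
by rewrite mul0r.
Qed.


Hypothesis Hc : forall n j, (j <= m)%N -> fs m f n j 0%N != 0.

Lemma an_neq0 n j : (0 < j)%N -> (j <= m)%N -> an m f n j != 0.
Proof.
move=> j0 jm; rewrite /an /acoef mulf_neq0 ?oppr_eq0 ?invr_eq0 ?Hc //; lia.
Qed.

Lemma size_XM (p : {poly C}) : size ('X * p) = if size p == 0%N then 0%N else (size p).+1.
Proof.
case: (eqVneq p 0) => [->|p0]; first by rewrite mulr0 size_poly0.
by rewrite mulrC size_mulX // size_poly_eq0 (negbTE p0).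
Qed.

Lemma sizeA0 (i s : 'I_m.+1) : size (Amat m f 0 i s) = dsz m 1 i s.
Proof.
rewrite /= Mmat_E /dsz.
case: (posnP i) => [i0|i0].
  rewrite i0 /= add1n.
  case: (eqVneq (s : nat) m) => [sm|sm].
    rewrite size_polyX sm leqnn divnn /=; lia.
  rewrite size_poly0; have -> : (m.+1 <= s.+1)%N = false by have := ltn_ord s; lia.
  by [].
rewrite andTb.
have im : (i <= m)%N by have := ltn_ord i; lia.
have sm : (s <= m)%N by have := ltn_ord s; lia.
case: (eqVneq (s : nat) i.-1) => [e|ne].
  rewrite size_poly1 e.
  have -> : (i.-1 <= i)%N = true by lia.
  have -> : (i <= 1 + i.-1)%N = true by lia.
  rewrite (_ : (1 + i.-1 - i = 0)%N); last by lia.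
  by rewrite div0n.
case: (eqVneq (s : nat) i) => [e|ne2].
  have hA : an m f 0 (m.+1 - i) != 0 by apply: an_neq0; lia.
  rewrite size_polyC hA e leqnn (_ : (i <= 1 + i)%N = true); last by lia.
  rewrite (_ : (1 + i - i = 1)%N); last by lia.
  rewrite divn_small //; lia.
rewrite size_poly0.
case: ifP => h; case: ifP => h2 //; lia.
Qed.

Hypothesis Hgp : forall n (i s : 'I_m.+1),
     size (Amat m f n.+1 i s) =
     (\max_(t < m.+1) size (Mmat m f n.+1 i t * Amat m f n t s)%R)%N.

Lemma sizeA n (i s : 'I_m.+1) : size (Amat m f n i s) = dsz m n.+1 i s.
Proof.
elim: n i s => [|n IH] i s; first exact: sizeA0.
have sm : (s <= m)%N by have := ltn_ord s; lia.
rewrite Hgp.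
case: (posnP i) => [i0|i0].
  rewrite (big_one _ _ _ _ _ ord_max).
    rewrite Mmat_E i0 /= eqxx size_XM IH.
    have := @dsz_row0 m n.+1 s (ltn0Sn n) sm.
  by [].
  move=> t tm; rewrite Mmat_E i0 /=.
  have -> : (t == m :> nat) = false by apply/negbTE; move: tm; apply: contra => /eqP e; apply/eqP/val_inj.
  by rewrite mul0r size_poly0.
have ne0 : (i == 0 :> nat) = false by lia.
have im : (i <= m)%N by have := ltn_ord i; lia.
rewrite (big_two _ _ _ _ _ (pi i) i).
- rewrite !Mmat_E ne0 pi_val eqxx mul1r.
  rewrite (_ : (nat_of_ord i == i.-1) = false) ?eqxx; last by lia.
  have hA : an m f n.+1 (m.+1 - i) != 0 by apply: an_neq0; lia.
  rewrite size_Cmul //.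
  rewrite !IH pi_val; exact: dsz_rowS.
- apply/negP => /eqP/(f_equal val) /=; rewrite pi_val; lia.
move=> t t1 t2; rewrite Mmat_E ne0.
have -> : (t == i.-1 :> nat) = false.
  by apply/negbTE; move: t1; apply: contra => /eqP e; apply/eqP/val_inj => /=; rewrite pi_val.
have -> : (t == i :> nat) = false by apply/negbTE; move: t2; apply: contra => /eqP e; apply/eqP/val_inj.
by rewrite mul0r size_poly0.
Qed.


Lemma pmulS_add (p q : {poly C}) g i : pmulS (p + q) g i = pmulS p g i + pmulS q g i.
Proof. by rewrite /pmulS -big_split /=; apply: eq_bigr => t _; rewrite coefD mulrDl. Qed.

Lemma pmulS_0 g i : pmulS (0 : {poly C}) g i = 0.
Proof. by rewrite /pmulS big1 // => t _; rewrite coef0 mul0r. Qed.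

Lemma pmulS_sum n (F : 'I_n -> {poly C}) g i :
  pmulS (\sum_t F t) g i = \sum_t pmulS (F t) g i.
Proof.
apply: (big_morph (fun p => pmulS p g i)); [move=> x y /=; exact: pmulS_add | exact: pmulS_0].
Qed.

Lemma pmulS_C c (p : {poly C}) g i : pmulS (c%:P * p) g i = c * pmulS p g i.
Proof. by rewrite /pmulS mulr_sumr; apply: eq_bigr => t _; rewrite coefCM mulrA. Qed.

Lemma pmulS_X (p : {poly C}) g i :
  pmulS ('X * p) g i = if i is i'.+1 then pmulS p g i' else 0.
Proof.
rewrite /pmulS big_ord_recl coefXM /= mul0r add0r.
case: i => [|i]; first by rewrite big_ord0.
by apply: eq_bigr => t _; rewrite coefXM /= subSS.
Qed.

Lemma pmulS_1 g i : pmulS (1 : {poly C}) g i = g i.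
Proof.
rewrite /pmulS big_ord_recl coef1 /= mul1r subn0 big1 ?addr0 // => t _.
by rewrite coef1 /= mul0r.
Qed.

Definition W (P : 'M[{poly C}]_m.+1) (r : 'I_m.+1) i :=
  \sum_(s < m.+1) pmulS (P r s) (f (m - s)) i.

Definition good (P : 'M[{poly C}]_m.+1) t := forall r i,
  W P r i = if (i < t)%N then 0 else fs m f t (m - r) (i - t).

Lemma good1 : good 1 0.
Proof.
move=> r i; rewrite /W (big_one _ _ _ _ _ r) ?mxE ?eqxx ?pmulS_1 ?subn0 //.
by move=> t tr; rewrite mxE eq_sym (negbTE tr) pmulS_0.
Qed.

Lemma good_step P t : good P t -> good (Mmat m f t *m P) t.+1.
Proof.
move=> HP r i; rewrite /W.
case: (posnP r) => [r0|r0].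
  under eq_bigr => s _ do rewrite mulM0 // pmulS_X.
  rewrite r0 subn0 /=.
  case: i => [|i]; first by rewrite big1.
  have := HP ord_max i; rewrite /W /= subnn => ->.
  by rewrite ltnS subSS /= eqxx.
under eq_bigr => s _ do rewrite mulMS // pmulS_add pmulS_C.
rewrite big_split /= -mulr_sumr.
have := HP (pi r) i; rewrite /W => ->.
have := HP r i; rewrite /W => ->.
rewrite pi_val.
have rm : (r <= m)%N by have := ltn_ord r; lia.
have -> : (m - r.-1 = (m - r).+1)%N by lia.
have -> : (m.+1 - r = (m - r).+1)%N by lia.
case: (ltngtP i t) => it.
- by rewrite ltnS (ltnW it) mulr0 addr0.
- rewrite ltnS leqNgt it /=.
  have -> : (i - t = (i - t.+1).+1)%N by lia.
  rewrite /= (_ : (m - r == m)%N = false); last by lia.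
  by rewrite (_ : (m - r < m)%N = true); last by lia.
- subst i; rewrite ltnSn subnn /an /acoef.
  have hc : fs m f t (m - r) 0%N != 0 by apply: Hc; lia.
  rewrite /= -mulrA mulVf // mulr1 subrr //.
Qed.

Lemma goodA n : good (Amat m f n) n.+1.
Proof.
elim: n => [|n IH] /=.
  by rewrite -[Mmat _ _ _]mulmx1; apply: good_step; exact: good1.
exact: good_step.
Qed.

End Main.

Lemma sum_kv N k l : (\sum_(j < N) (if (j < l)%N then k.+1 else k) = N * k + minn N l)%N.
Proof.
elim: N => [|N IH]; first by rewrite big_ord0 mul0n min0n.
rewrite big_ord_recr /= IH mulSnr; case: ifP => h; lia.
Qed.

Theorem theorem3 (R : realType) (m : nat) (f : nat -> nat -> R[i])
  (Hgp : general_position m f) (n k l : nat)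
  (Hl : (l <= m)%N) (Hn : n.+1 = (m + m.+1 * k + l)%N) :
  let Q := fun j : 'I_m.+1 => Amat m f n ord_max (inord (m - j)) in
  let kv := fun j : 'I_m.+1 => if (j < l)%N then k.+1 else k in
  (l = 0%N ->
     (forall s : 'I_m.+1, size (Amat m f n ord_max s) = k.+1) /\
     @HP_typeI _ m f (fun _ => k) Q) /\
  ((0 < l)%N ->
     (forall s : 'I_m.+1, (s < l)%N -> size (Q s) = k.+2) /\
     (forall s : 'I_m.+1, (l <= s)%N -> size (Q s) = k.+1) /\
     @HP_typeI _ m f kv Q) /\
  (forall j : 'I_m.+1, size (Q j) = (kv j).+1) /\
  ((\sum_(j < m.+1) kv j) + m = n.+1)%N.
Proof.
move=> Q kv; case: Hgp => Hc Hg.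
have tpos : (0 < m + m.+1 * k + l)%N by rewrite -Hn.
have hQ : forall j : 'I_m.+1, size (Q j) = (kv j).+1.
  move=> j; rewrite /Q (@sizeA _ _ _ Hc Hg) /= inordK; last by lia.
  have jm : (j <= m)%N by have := ltn_ord j; lia.
  rewrite Hn dsz_last //; last by lia.
  rewrite /kv; case: ltnP => h.
    have -> : (j < l)%N = true by lia.
    by change (k + 1 + 1 = k.+2)%N; lia.
  have -> : (j < l)%N = false by lia.
  by change (k + 0 + 1 = k.+1)%N; lia.
have hsum : ((\sum_(j < m.+1) kv j) + m = n.+1)%N.
  rewrite /kv sum_kv Hn; lia.
have HPgen : forall kv' : 'I_m.+1 -> nat, (forall j, size (Q j) <= (kv' j).+1)%N ->
    ((\sum_(j < m.+1) kv' j) + m = n.+1)%N -> @HP_typeI _ m f kv' Q.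
  move=> kv' hs he; split.
  - by exists ord0; rewrite -size_poly_eq0 hQ.
  - exact: hs.
  rewrite he => i hi.
  transitivity (@W _ m f (Amat m f n) ord_max i); last by rewrite (@goodA _ _ _ Hc n) hi.
  rewrite /W (reindex_inj rev_ord_inj) /=; apply: eq_bigr => j _.
  have jm : (j <= m)%N by have := ltn_ord j; lia.
  have -> : rev_ord j = inord (m - j) :> 'I_m.+1.
    by apply: val_inj; rewrite /= inordK; lia.
  rewrite /Q subSS inordK; last by lia.
  rewrite (_ : (m - (m - j) = j)%N); last by lia.
  by rewrite inord_val.
split; [|split; [|split]] => //.
- move=> l0; split.
    move=> s; rewrite (@sizeA _ _ _ Hc Hg) /= Hn l0 dsz_last //; last first.
    + by move: tpos; rewrite l0.
    + by have := ltn_ord s; lia.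
    have -> : (m < 0 + s)%N = false by have := ltn_ord s; lia.
    by change (k + 0 + 1 = k.+1)%N; lia.
  apply: HPgen.
    by move=> j; rewrite hQ /kv l0.
  by rewrite -hsum /kv l0.
- move=> l0; split; [|split].
  + by move=> s hs; rewrite hQ /kv hs.
  + by move=> s hs; rewrite hQ /kv ltnNge hs.
  apply: HPgen => // j; rewrite hQ //.
Qed.
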